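(* Let $K>0$, $K\neq 1$, and let \[ A_5=\begin{pmatrix} K & 1 & 1\\ 1 & K & 1\\ 1 & 1 & 1\end{pmatrix}. \] Then \[ S(A_5)=\begin{pmatrix} a & b & c\\ b & a & c\\ c & c & d\end{pmatrix} \] with \[ a=\frac{K\left(2K+1-\sqrt{4K+5}\right)}{2(K^2-1)},\quad b=\frac{2K+1-\sqrt{4K+5}}{2(K^2-1)},\quad d=\frac{K+2-\sqrt{4K+5}}{K-1},\quad c=\sqrt{bd}. \] Equivalently $S(A_5)=XA_5X$ with $X=\operatorname{diag}(x,x,z)$, $x^2=b$, $z^2=d$. Moreover $\lim_{K\to\infty}S(A_5)=I_3$.
   Context: For a positive $n\times n$ matrix $A$, the Sinkhorn limit $S(A)$ is the unique doubly stochastic matrix of the form $XAY$ with $X,Y$ positive diagonal matrices; it is the limit of alternately row scaling (dividing each row by its row sum) and column scaling (dividing each column by its column sum) starting from $A$. For a positive symmetric matrix $A$ there is a unique positive diagonal $X$ with $S(A)=XAX$. *)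

(* Defs.v *)
From HB Require Import structures.
From mathcomp Require Import all_boot all_order all_algebra.
From mathcomp Require Import all_classical all_reals all_analysis.
Set Implicit Arguments. Unset Strict Implicit. Unset Printing Implicit Defensive.
Import Order.TTheory GRing.Theory Num.Theory.
Import numFieldNormedType.Exports.
Local Open Scope ring_scope.

Definition doubly_stochastic (R : realType) (n : nat) (S : 'M[R]_n) : Prop :=
  (forall i j, 0 <= S i j) /\
  (forall i, \sum_(j < n) S i j = 1) /\
  (forall j, \sum_(i < n) S i j = 1).

Definition sinkhorn_spec (R : realType) (n : nat) (A S : 'M[R]_n) : Prop :=
  doubly_stochastic S /\
  exists x y : 'I_n -> R,
    (forall i, 0 < x i) /\ (forall j, 0 < y j) /\
    S = diag_mx (\row_i x i) *m A *m diag_mx (\row_j y j).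

(* The Sinkhorn limit S(A): the (unique, for positive A) doubly stochastic
   matrix of the form X A Y. *)
Definition sinkhorn (R : realType) (n : nat) (A : 'M[R]_n) : 'M[R]_n :=
  xget 0 (sinkhorn_spec A).

Definition mx3 (R : realType) (r : seq (seq R)) : 'M[R]_3 :=
  \matrix_(i < 3, j < 3) nth 0 (nth [::] r i) j.

Definition A5 (R : realType) (K : R) : 'M[R]_3 :=
  mx3 [:: [:: K; 1; 1]; [:: 1; K; 1]; [:: 1; 1; 1]].

Definition diag3 (R : realType) (x y z : R) : 'M[R]_3 :=
  diag_mx (\row_(i < 3) nth 0 [:: x; y; z] i).

(* Main.v *)
Require Import Defs.
From HB Require Import structures.
From mathcomp Require Import all_boot all_order all_algebra.
From mathcomp Require Import all_classical all_reals all_analysis.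
From mathcomp Require Import ring lra.
Import Order.TTheory GRing.Theory Num.Theory.
Import numFieldNormedType.Exports.
Local Open Scope classical_set_scope.
Local Open Scope ring_scope.
Set Implicit Arguments. Unset Strict Implicit.

Lemma dAd_entry (R : realType) n (A : 'M[R]_n) (x y : 'I_n -> R) i j :
  (diag_mx (\row_i x i) *m A *m diag_mx (\row_j y j)) i j = x i * A i j * y j.
Proof. by rewrite mul_diag_mx mul_mx_diag !mxE. Qed.

Lemma sinkhorn_unique (R : realType) n (A S1 S2 : 'M[R]_n.+1) :
  (forall i j, 0 < A i j) -> sinkhorn_spec A S1 -> sinkhorn_spec A S2 -> S1 = S2.
Proof.
move=> Apos [[_ [R1 C1]] [x1 [y1 [hx1 [hy1 E1']]]]] [[_ [R2 C2]] [x2 [y2 [hx2 [hy2 E2]]]]].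
subst S1.
set S := diag_mx _ *m _ *m _ in R1 C1 *.
have Spos : forall i j, 0 < S i j.
  by move=> i j; rewrite /S dAd_entry !mulr_gt0.
pose p i := x2 i / x1 i. pose q j := y2 j / y1 j.
have pp : forall i, 0 < p i by move=> i; rewrite divr_gt0.
have qp : forall j, 0 < q j by move=> j; rewrite divr_gt0.
have ES : forall i j, S2 i j = p i * S i j * q j.
  move=> i j; rewrite E2 /S !dAd_entry /p /q.
  have h1 := hx1 i; have h2 := hy1 j.
  field; apply/andP; split; rewrite gt_eqF //.
case: (@arg_maxP _ _ _ ord0 xpredT p erefl) => i0 _ Hi0.
case: (@arg_minP _ _ _ ord0 xpredT q erefl) => j0 _ Hj0.
have H1 : \sum_i (p i0 - p i) * S i j0 * q j0 = p i0 * q j0 - 1.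
  have C2' : \sum_i p i * S i j0 * q j0 = 1.
    by rewrite -(C2 j0); apply: eq_bigr => i _; rewrite ES.
  rewrite -C2' -[p i0 * q j0]mulr1 -(C1 j0) mulr_sumr -sumrB.
  by apply: eq_bigr => i _; ring.
have H2 : \sum_j p i0 * S i0 j * (q j - q j0) = 1 - p i0 * q j0.
  have R2' : \sum_j p i0 * S i0 j * q j = 1.
    by rewrite -(R2 i0); apply: eq_bigr => j _; rewrite ES.
  rewrite -{1}R2' -[p i0 * q j0]mulr1 -(R1 i0) mulr_sumr -sumrB.
  by apply: eq_bigr => j _; ring.
have h1 : forall k, xpredT k -> 0 <= (p i0 - p k) * S k j0 * q j0.
  move=> k _; apply: mulr_ge0; last exact: ltW.
  by apply: mulr_ge0; [rewrite subr_ge0; exact: Hi0|exact: ltW].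
have h2 : forall k, xpredT k -> 0 <= p i0 * S i0 k * (q k - q j0).
  move=> k _; apply: mulr_ge0; last by rewrite subr_ge0; exact: Hj0.
  by apply: mulr_ge0; exact: ltW.
have G1 : 0 <= p i0 * q j0 - 1.
  by rewrite -H1; apply: sumr_ge0 => i _; apply: h1.
have G2 : 0 <= 1 - p i0 * q j0.
  by rewrite -H2; apply: sumr_ge0 => i _; apply: h2.
have E1 : p i0 * q j0 = 1.
  by apply: le_anti; apply/andP; split; rewrite -subr_ge0.
have Z1 : forall i, p i = p i0.
  have := psumr_eq0P h1; rewrite H1 E1 subrr => /(_ erefl) Z i.
  have hsq : S i j0 * q j0 != 0 by rewrite mulf_neq0 // gt_eqF ?Spos ?qp.
  move: (Z i erefl) => /eqP; rewrite -mulrA mulf_eq0 (negPf hsq) orbF subr_eq0.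
  by move/eqP.
have Z2 : forall j, q j = q j0.
  have := psumr_eq0P h2; rewrite H2 E1 subrr => /(_ erefl) Z j.
  have hsq : p i0 * S i0 j != 0 by rewrite mulf_neq0 // gt_eqF ?Spos ?pp.
  move: (Z j erefl) => /eqP; rewrite mulf_eq0 (negPf hsq) /= subr_eq0.
  by move/eqP.
apply/matrixP => i j; rewrite ES Z1 Z2.
by rewrite mulrC mulrA [q j0 * _]mulrC E1 mul1r.
Qed.

Lemma d3_entry (R : realType) (x y z : R) (A : 'M[R]_3) i j :
  (diag3 x y z *m A *m diag3 x y z) i j =
  nth 0 [:: x; y; z] i * A i j * nth 0 [:: x; y; z] j.
Proof. by rewrite /diag3 mul_diag_mx mul_mx_diag !mxE. Qed.

Lemma mx3_row (R : realType) (r : seq (seq R)) (i : 'I_3) :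
  \sum_(j < 3) mx3 r i j = nth 0 (nth [::] r i) 0 + nth 0 (nth [::] r i) 1 + nth 0 (nth [::] r i) 2.
Proof. by rewrite !big_ord_recr big_ord0 !mxE /= add0r. Qed.

Lemma mx3_col (R : realType) (r : seq (seq R)) (j : 'I_3) :
  \sum_(i < 3) mx3 r i j = nth 0 (nth [::] r 0) j + nth 0 (nth [::] r 1) j + nth 0 (nth [::] r 2) j.
Proof. by rewrite !big_ord_recr big_ord0 !mxE /= add0r. Qed.


Definition sS (R : realType) (K : R) := Num.sqrt (4 * K + 5).
Arguments sS {R}.
Definition bS (R : realType) (K : R) := 2 / (2 * K + 1 + sS K).
Definition cS (R : realType) (K : R) := 2 / (sS K + 3).
Definition dS (R : realType) (K : R) := (K + 1) / (K + 2 + sS K).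
Arguments bS {R}. Arguments cS {R}. Arguments dS {R}.

Lemma s_pos (R : realType) (K : R) : 0 < K -> 0 < sS K.
Proof. by move=> hK; rewrite sqrtr_gt0; lra. Qed.
Lemma s_sq (R : realType) (K : R) : 0 < K -> sS K ^+ 2 = 4 * K + 5.
Proof. by move=> hK; rewrite sqr_sqrtr //; lra. Qed.
Lemma K_s (R : realType) (K : R) : 0 < K -> K = (sS K ^+ 2 - 5) / 4.
Proof. by move=> hK; rewrite s_sq //; field. Qed.

Lemma bS_pos (R : realType) (K : R) : 0 < K -> 0 < bS K.
Proof. move=> hK; have := s_pos hK; rewrite /bS => h; rewrite divr_gt0 //; lra. Qed.
Lemma cS_pos (R : realType) (K : R) : 0 < K -> 0 < cS K.
Proof. move=> hK; have := s_pos hK; rewrite /cS => h; rewrite divr_gt0 //; lra. Qed.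
Lemma dS_pos (R : realType) (K : R) : 0 < K -> 0 < dS K.
Proof. move=> hK; have := s_pos hK; rewrite /dS => h; rewrite divr_gt0 //; lra. Qed.

Lemma row1 (R : realType) (K : R) : 0 < K -> K * bS K + bS K + cS K = 1.
Proof.
move=> hK; have hs := s_pos hK; have hs2 := s_sq hK.
rewrite /bS /cS.
set s := sS K in hs hs2 *.
rewrite (K_s hK) -/s. field.
by apply/andP; split; apply: lt0r_neq0; nra.
Qed.

Lemma row3 (R : realType) (K : R) : 0 < K -> 2 * cS K + dS K = 1.
Proof.
move=> hK; have hs := s_pos hK; have hs2 := s_sq hK.
rewrite /dS /cS.
set s := sS K in hs hs2 *.
rewrite (K_s hK) -/s. field.
by apply/andP; split; apply: lt0r_neq0; nra.
Qed.

Lemma cS_sq (R : realType) (K : R) : 0 < K -> cS K ^+ 2 = bS K * dS K.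
Proof.
move=> hK; have hs := s_pos hK; have hs2 := s_sq hK.
rewrite /bS /dS /cS.
set s := sS K in hs hs2 *.
rewrite (K_s hK) -/s. field.
by repeat (apply/andP; split); apply: lt0r_neq0; nra.
Qed.

Lemma s_neq3 (R : realType) (K : R) : 0 < K -> K != 1 -> sS K != 3.
Proof.
move=> hK hK1; apply/eqP => h3; move/eqP: hK1; apply.
by rewrite (K_s hK) h3; field.
Qed.

Lemma b_eq (R : realType) (K : R) : 0 < K -> K != 1 ->
  (2 * K + 1 - sS K) / (2 * (K ^+ 2 - 1)) = bS K.
Proof.
move=> hK hK1; have hs := s_pos hK; have hs2 := s_sq hK; have h3 := s_neq3 hK hK1.
rewrite /bS.
set s := sS K in hs hs2 h3 *.
rewrite (K_s hK) -/s. field.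
apply/andP; split; first by apply: lt0r_neq0; nra.
have -> : (s ^+ 2 - 5) ^+ 2 - 16 = (s - 3) * ((s + 3) * (s ^+ 2 - 1)) by ring.
rewrite mulf_neq0 ?subr_eq0 // mulf_neq0 // lt0r_neq0 //; nra.
Qed.

Lemma a_eq (R : realType) (K : R) : 0 < K -> K != 1 ->
  K * (2 * K + 1 - sS K) / (2 * (K ^+ 2 - 1)) = K * bS K.
Proof. by move=> hK hK1; rewrite -b_eq // mulrA. Qed.

Lemma d_eq (R : realType) (K : R) : 0 < K -> K != 1 ->
  (K + 2 - sS K) / (K - 1) = dS K.
Proof.
move=> hK hK1; have hs := s_pos hK; have hs2 := s_sq hK; have h3 := s_neq3 hK hK1.
rewrite /dS.
set s := sS K in hs hs2 h3 *.
rewrite (K_s hK) -/s. field.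
apply/andP; split; first by apply: lt0r_neq0; nra.
have -> : s ^+ 2 - 5 - 4 = (s - 3) * (s + 3) by ring.
rewrite mulf_neq0 ?subr_eq0 // lt0r_neq0 //; nra.
Qed.

Definition MS (R : realType) (K : R) : 'M[R]_3 :=
  mx3 [:: [:: K * bS K; bS K; cS K]; [:: bS K; K * bS K; cS K]; [:: cS K; cS K; dS K]].

Lemma xz_eq (R : realType) (K : R) : 0 < K ->
  Num.sqrt (bS K) * Num.sqrt (dS K) = cS K.
Proof.
move=> hK; rewrite -sqrtrM; last exact: ltW (bS_pos hK).
by rewrite -cS_sq // sqrtr_sqr ger0_norm // ltW // cS_pos.
Qed.

Lemma P_eq (R : realType) (K : R) : 0 < K ->
  diag3 (Num.sqrt (bS K)) (Num.sqrt (bS K)) (Num.sqrt (dS K)) *m A5 K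
    *m diag3 (Num.sqrt (bS K)) (Num.sqrt (bS K)) (Num.sqrt (dS K)) = MS K.
Proof.
move=> hK.
have hx : Num.sqrt (bS K) * Num.sqrt (bS K) = bS K.
  by rewrite -expr2 sqr_sqrtr // ltW // bS_pos.
have hz : Num.sqrt (dS K) * Num.sqrt (dS K) = dS K.
  by rewrite -expr2 sqr_sqrtr // ltW // dS_pos.
have hxz := xz_eq hK.
have hzx : Num.sqrt (dS K) * Num.sqrt (bS K) = cS K by rewrite mulrC.
apply/matrixP => i j; rewrite d3_entry !mxE.
case: i => [[|[|[|i]]] Hi] //; case: j => [[|[|[|j]]] Hj] //=;
  rewrite ?mulr1 ?hx ?hz ?hxz ?hzx //.
- by rewrite mulrC mulrA hx mulrC.
- by rewrite mulrC mulrA hx mulrC.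
Qed.

Lemma MS_spec (R : realType) (K : R) : 0 < K -> sinkhorn_spec (A5 K) (MS K).
Proof.
move=> hK; have hb := bS_pos hK; have hc := cS_pos hK; have hd := dS_pos hK.
have r1 := row1 hK; have r3 := row3 hK.
split; first split; [|split|].
- move=> i j; rewrite !mxE.
  case: i => [[|[|[|i]]] Hi] //; case: j => [[|[|[|j]]] Hj] //=; apply: ltW; rewrite ?(mulr_gt0 hK hb) //.
- move=> i; rewrite mx3_row.
  case: i => [[|[|[|i]]] Hi] //=; lra.
- move=> j; rewrite mx3_col.
  case: j => [[|[|[|j]]] Hj] //=; lra.
exists (fun i : 'I_3 => nth 0 [:: Num.sqrt (bS K); Num.sqrt (bS K); Num.sqrt (dS K)] i).
exists (fun i : 'I_3 => nth 0 [:: Num.sqrt (bS K); Num.sqrt (bS K); Num.sqrt (dS K)] i).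
have hp : forall i : 'I_3, 0 < nth 0 [:: Num.sqrt (bS K); Num.sqrt (bS K); Num.sqrt (dS K)] i.
  by case => [[|[|[|i]]] Hi] //=; rewrite sqrtr_gt0.
by split; [|split]; rewrite // -P_eq.
Qed.

Lemma A5_pos (R : realType) (K : R) : 0 < K -> forall i j, 0 < A5 K i j.
Proof. by move=> hK i j; rewrite !mxE; case: i => [[|[|[|i]]] Hi] //; case: j => [[|[|[|j]]] Hj]. Qed.

Lemma sinkhorn_A5 (R : realType) (K : R) : 0 < K -> sinkhorn (A5 K) = MS K.
Proof.
move=> hK; apply: (sinkhorn_unique (A5_pos hK)); last exact: MS_spec.
by apply: xgetPex; exists (MS K); exact: MS_spec.
Qed.

Lemma A5_lim (R : realType) (i j : 'I_3) :
  (fun L : R => sinkhorn (A5 L) i j) @ +oo --> (1%:M : 'M[R]_3) i j.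
Proof.
apply/cvgrPdist_lt => eps heps.
set r := eps / 4.
have hr : 0 < r by rewrite /r divr_gt0.
have e4 : eps = 4 * r by rewrite /r; field.
set u := r^-1. set v := (r ^+ 2)^-1.
have hu : r * u = 1 by rewrite /u divff // gt_eqF.
have hv : r ^+ 2 * v = 1 by rewrite /v divff // gt_eqF // exprn_gt0.
have u0 : 0 < u by rewrite /u invr_gt0.
have v0 : 0 < v by rewrite /v invr_gt0 exprn_gt0.
exists (u + v); split; first exact: num_real.
move=> L HL.
have hL : 0 < L by lra.
have hb := bS_pos hL; have hc := cS_pos hL; have hd := dS_pos hL.
have r1 := row1 hL; have r3 := row3 hL; have csq := cS_sq hL.
have rL : 1 < r * L by nra.
have r2L : 1 < r ^+ 2 * L by rewrite -hv; rewrite ltr_pM2l ?exprn_gt0 //; lra.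
have bL : L * bS L < 1 by lra.
have br : bS L < r by nra.
have c2 : cS L ^+ 2 < bS L by rewrite csq; nra.
have c2r : cS L ^+ 2 < r ^+ 2 by nra.
have cr : cS L < r.
  by move: c2r; rewrite ltr_pXn2r // ?nnegrE ltW.
rewrite /= sinkhorn_A5 // !mxE.
case: i => [[|[|[|i]]] Hi] //; case: j => [[|[|[|j]]] Hj] //=;
  rewrite ltr_norml; apply/andP; split; lra.
Qed.

Unset Implicit Arguments.

Theorem mainTheorem10 (R : realType) (K : R) (hK0 : 0 < K) (hK1 : K != 1) :
  let a := K * (2 * K + 1 - Num.sqrt (4 * K + 5)) / (2 * (K ^+ 2 - 1)) in
  let b := (2 * K + 1 - Num.sqrt (4 * K + 5)) / (2 * (K ^+ 2 - 1)) in
  let d := (K + 2 - Num.sqrt (4 * K + 5)) / (K - 1) in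
  let c := Num.sqrt (b * d) in
  [/\ sinkhorn (A5 K) = mx3 [:: [:: a; b; c]; [:: b; a; c]; [:: c; c; d]],
      exists x z : R, [/\ 0 < x, 0 < z, x ^+ 2 = b, z ^+ 2 = d &
        sinkhorn (A5 K) = diag3 x x z *m A5 K *m diag3 x x z] &
      forall i j : 'I_3,
        (fun L : R => sinkhorn (A5 L) i j) @ +oo --> (1%:M : 'M[R]_3) i j].
Proof.
move=> a b d c.
have Ea : a = K * bS K := a_eq hK0 hK1.
have Eb : b = bS K := b_eq hK0 hK1.
have Ed : d = dS K := d_eq hK0 hK1.
have Ec : c = cS K.
  by rewrite /c Eb Ed -cS_sq // sqrtr_sqr ger0_norm // ltW // cS_pos.
split.
- by rewrite sinkhorn_A5 // Ea Eb Ec Ed.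
- exists (Num.sqrt (bS K)), (Num.sqrt (dS K)); split.
  + by rewrite sqrtr_gt0 bS_pos.
  + by rewrite sqrtr_gt0 dS_pos.
  + by rewrite Eb sqr_sqrtr // ltW // bS_pos.
  + by rewrite Ed sqr_sqrtr // ltW // dS_pos.
  + by rewrite sinkhorn_A5 // P_eq.
- exact: A5_lim.
Qed.
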